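(* Let $Q\in\mathrm{St}(n,r)$ and $\mathcal{I}=\{(i,j):V_{ij}=0\ \text{for all } V\in T_Q\mathrm{St}(n,r)\}$. Then: (i) if $(i,j)\in\mathcal{I}$, then $Q_{ij}\in\{\pm1\}$; (ii) if $(i,j)\notin\mathcal{I}$, then the set $\mathcal{Z}_{ij}:=\{Z\in\mathbb{R}^{n\times r}:(\mathbf{P}_QZ)_{ij}=0\}$ has zero Lebesgue measure.
   Context: $\mathrm{St}(n,r)=\{Q\in\mathbb{R}^{n\times r}:Q^\top Q=I_r\}$ is the Stiefel manifold, with tangent space $T_Q\mathrm{St}(n,r)=\{V\in\mathbb{R}^{n\times r}:Q^\top V+V^\top Q=0\}$, and $\mathbf{P}_Q(Z)=Z-Q(Q^\top Z+Z^\top Q)/2$ is the orthogonal projection of $Z\in\mathbb{R}^{n\times r}$ onto $T_Q\mathrm{St}(n,r)$. *)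

(* Defs.v *)
From HB Require Import structures.
From mathcomp Require Import all_boot all_order all_algebra.
From mathcomp Require Import boolp classical_sets reals.
Set Implicit Arguments. Unset Strict Implicit. Unset Printing Implicit Defensive.
Import Order.TTheory GRing.Theory Num.Theory.
Local Open Scope ring_scope.
Local Open Scope classical_set_scope.

Section Stiefel.
Variable R : realType.

Definition stiefel (n r : nat) (Q : 'M[R]_(n, r)) : Prop := Q^T *m Q = 1%:M.

Definition tangent (n r : nat) (Q V : 'M[R]_(n, r)) : Prop :=
  Q^T *m V + V^T *m Q = 0.

Definition projT (n r : nat) (Q Z : 'M[R]_(n, r)) : 'M[R]_(n, r) :=
  Z - 2^-1 *: (Q *m (Q^T *m Z + Z^T *m Q)).

Definition fixed_idx (n r : nat) (Q : 'M[R]_(n, r)) : set ('I_n * 'I_r) :=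
  [set ij | forall V, tangent Q V -> V ij.1 ij.2 = 0].

Definition lebesgue_null (m n : nat) (A : set 'M[R]_(m, n)) : Prop :=
  forall eps : R, 0 < eps ->
  exists a b : nat -> 'M[R]_(m, n),
    (forall k i j, a k i j <= b k i j) /\
    A `<=` \bigcup_k [set x | forall i j, a k i j <= x i j <= b k i j] /\
    (forall N : nat,
       \sum_(k < N) \prod_(i < m) \prod_(j < n) (b k i j - a k i j) <= eps).

End Stiefel.

(* Main.v *)
Require Import Defs.
From HB Require Import structures.
From mathcomp Require Import all_boot all_order all_algebra.
From mathcomp Require Import boolp classical_sets reals.
From mathcomp Require Import ring lra zify.
Import Order.TTheory GRing.Theory Num.Theory.
Local Open Scope ring_scope.
Local Open Scope classical_set_scope.
Set Implicit Arguments. Unset Strict Implicit. Unset Printing Implicit Defensive.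

Section Levels.
Variable R : realType.
Variables n r : nat.
Let M := 'M[R]_(n, r).
Let box := (M * M)%type.
Definition vol (x : box) := \prod_(i < n) \prod_(j < r) (x.2 i j - x.1 i j).
Definition inbox (x : box) (Z : M) := forall i j, x.1 i j <= Z i j <= x.2 i j.

Lemma vol_ge0 (x : box) : (forall i j, x.1 i j <= x.2 i j) -> 0 <= vol x.
Proof.
move=> H; apply: prodr_ge0 => i _; apply: prodr_ge0 => j _.
by rewrite subr_ge0.
Qed.

Lemma geom_sum (eps : R) N : \sum_(u < N) eps / 2 ^+ u.+1 = eps - eps / 2 ^+ N.
Proof.
elim: N => [|N IH]; first by rewrite big_ord0 expr0 divr1 subrr.
rewrite big_ord_recr /= IH exprS.
have h2 : (2 : R) ^+ N != 0 by rewrite expf_neq0 // pnatr_eq0.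
by field; rewrite h2.
Qed.

Variable L : nat -> seq box.
Variable z : box.

Fixpoint S (t : nat) : seq box := if t is t'.+1 then S t' ++ L t'.+1 else L 0.

Hypothesis L_ne : forall t, (0 < size (L t))%N.
Hypothesis z_valid : forall i j, z.1 i j <= z.2 i j.

Lemma S_size t : (t < size (S t))%N.
Proof.
elim: t => [|t IH] /=; first exact: L_ne.
rewrite size_cat; have := L_ne t.+1; lia.
Qed.

Lemma S_prefix t d : exists s, S (t + d) = S t ++ s.
Proof.
elim: d => [|d [s Hs]]; first by exists [::]; rewrite addn0 cats0.
by exists (s ++ L (t + d).+1); rewrite addnS /= Hs catA.
Qed.

Lemma S_nth t T k : (t <= T)%N -> (k < size (S t))%N -> nth z (S T) k = nth z (S t) k.
Proof.
move=> HtT Hk; have [s Hs] := S_prefix t (T - t).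
by rewrite subnKC // in Hs; rewrite Hs nth_cat Hk.
Qed.

Lemma S_mem t x : x \in S t -> exists u, x \in L u.
Proof.
elim: t => [|t IH] /=; first by exists 0%N.
by rewrite mem_cat => /orP [/IH //|H]; exists t.+1.
Qed.

Lemma S_sum t : \sum_(x <- S t) vol x = \sum_(u < t.+1) \sum_(x <- L u) vol x.
Proof.
elim: t => [|t IH] /=; first by rewrite big_ord_recr big_ord0 /= add0r.
by rewrite big_cat IH [in RHS]big_ord_recr.
Qed.

Lemma levels_null (A : set M) (eps : R) :
  0 < eps ->
  (forall t x, x \in L t -> forall i j, x.1 i j <= x.2 i j) ->
  (forall t, \sum_(x <- L t) vol x <= eps / 2 ^+ t.+1) ->
  (forall Z, A Z -> exists t, exists2 x, x \in L t & inbox x Z) ->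
  exists a b : nat -> M,
    (forall k i j, a k i j <= b k i j) /\
    A `<=` \bigcup_k [set x | forall i j, a k i j <= x i j <= b k i j] /\
    (forall N : nat,
       \sum_(k < N) \prod_(i < n) \prod_(j < r) (b k i j - a k i j) <= eps).
Proof.
move=> eps0 Hval Hsum Hcov.
have Hvalid : forall t x, x \in S t -> forall i j, x.1 i j <= x.2 i j.
  by move=> t x /S_mem [u Hu]; exact: Hval Hu.
exists (fun k => (nth z (S k) k).1), (fun k => (nth z (S k) k).2).
split; [|split].
- move=> k; apply: (Hvalid k); exact: mem_nth (S_size k).
- move=> Z /Hcov [t [x Hx HZ]].
  pose off := if t is t'.+1 then size (S t') else 0%N.
  have Hk : forall p, (p < size (L t))%N ->
      nth z (S t) (off + p) = nth z (L t) p /\ (off + p < size (S t))%N.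
    case: t @off Hx HZ => [|t] /= Hx HZ p Hp; first by rewrite add0n.
    rewrite nth_cat size_cat ltnNge leq_addr /= addKn; split => //.
    by rewrite ltn_add2l.
  set p := index x (L t).
  have Hp : (p < size (L t))%N by rewrite index_mem.
  have [Hk1 Hk2] := Hk p Hp.
  rewrite nth_index // in Hk1.
  exists (off + p)%N => //=.
  have E1 := @S_nth t (maxn (off + p) t) (off + p) (leq_maxr _ _) Hk2.
  have E2 := @S_nth (off + p) (maxn (off + p) t) (off + p) (leq_maxl _ _) (S_size (off + p)).
  rewrite -E2 E1 Hk1; exact: HZ.
- move=> N.
  have -> : \sum_(k < N) \prod_(i < n) \prod_(j < r)
      ((nth z (S k) k).2 i j - (nth z (S k) k).1 i j) =
      \sum_(k < N) vol (nth z (S N) k).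
    apply: eq_bigr => k _; rewrite /vol (@S_nth k N k (ltnW (ltn_ord k))) //.
    exact: S_size.
  apply: (le_trans (y := \sum_(x <- S N) vol x)).
    rewrite [X in _ <= X](big_nth z) -(big_mkord xpredT (fun k => vol (nth z (S N) k))).
    rewrite [X in _ <= X](big_cat_nat _ (n := N)) //=; last exact: ltnW (S_size N).
    rewrite lerDl; apply: sumr_ge0 => k _; apply: vol_ge0.
    case: (ltnP k (size (S N))) => Hk; first by apply: (Hvalid N); exact: mem_nth.
    by rewrite nth_default.
  rewrite S_sum; apply: (le_trans (y := \sum_(u < N.+1) eps / 2 ^+ u.+1)).
    by apply: ler_sum => u _; exact: Hsum.
  rewrite geom_sum gerBl; apply: divr_ge0; first exact: ltW.
  by apply: exprn_ge0.
Qed.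
End Levels.
Lemma cell_lemma (R : realType) (s T y : R) (Kp : nat) :
  0 < s -> 2 * T = (Kp.+1)%:R * s -> - T <= y <= T ->
  let k := minn Kp (Num.truncn ((y + T) / s)) in
  - T + k%:R * s <= y <= - T + k%:R * s + s.
Proof.
move=> s0 HK /andP [H1 H2] /=.
set v := (y + T) / s; set k := minn Kp (Num.truncn v).
have v0 : 0 <= v by apply: divr_ge0; [lra | exact: ltW].
have yv : y = - T + v * s by rewrite /v mulfVK ?gt_eqF //; lra.
have vK : v <= (Kp.+1)%:R.
  by rewrite /v ler_pdivrMr // -HK; lra.
have [Hq1 Hq2] : ((Num.truncn v)%:R <= v) /\ (v < (Num.truncn v).+1%:R).
  by have /andP [] := truncn_itv v0.
have [Hk1 Hk2] : (k%:R <= v) /\ (v <= k%:R + 1).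
  rewrite /k; case: (leqP Kp (Num.truncn v)) => Hc.
    split; last by rewrite -natr1 in vK.
    apply: le_trans Hq1; by rewrite ler_nat.
  split => //.
  by rewrite -natr1 in Hq2; apply: ltW.
rewrite yv; apply/andP; split.
  by rewrite lerD2l ler_pM2r.
rewrite -addrA lerD2l. rewrite -[X in _ <= _ + X](mul1r s) -mulrDl ler_pM2r //.
Qed.

Section Grid.
Variable R : realType.
Variables n r : nat.
Variable c : 'I_n -> 'I_r -> R.
Variable p0 : ('I_n * 'I_r)%type.
Hypothesis hc : c p0.1 p0.2 = 1.
Variable eps : R.
Hypothesis eps0 : 0 < eps.

Definition X := ('I_n * 'I_r)%type.
Definition cc (x : X) := c x.1 x.2.
Definition C := \sum_(x : X) `|cc x|.
Lemma C_ge0 : 0 <= C. Proof. by apply: sumr_ge0 => x _. Qed.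

Definition TT (t : nat) : R := (t.+1)%:R.
Definition PP t := \prod_(x : X | x != p0) (2 * TT t).
Definition GG t := 2 * C * (2 * TT t) * PP t.
Definition Kp t := Num.truncn (GG t * 2 ^+ t.+1 / eps).
Definition ss t := 2 * TT t / ((Kp t).+1)%:R.
Definition MM t := {ffun X -> 'I_(Kp t).+1}.
Definition uu t (m : MM t) (x : X) := - TT t + (m x)%:R * ss t.
Definition ee t (m : MM t) := - \sum_(x : X | x != p0) cc x * uu m x.
Definition ww t (x : X) (j : 'I_(Kp t).+1) :=
  if x == p0 then (if j == ord0 then 2 * C * ss t else 0) else ss t.
Definition lo t (m : MM t) (x : X) := if x == p0 then ee m - C * ss t else uu m x.
Definition bx t (m : MM t) : ('M[R]_(n, r) * 'M[R]_(n, r))%type :=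
  (\matrix_(i, j) lo m (i, j), \matrix_(i, j) (lo m (i, j) + ww (i, j) (m (i, j)))).
Definition LL t := [seq bx m | m <- enum (MM t)].

Lemma ss_gt0 t : 0 < ss t.
Proof. by rewrite /ss /TT divr_gt0 // mulr_gt0 // ltr0n. Qed.

Lemma ww_ge0 t x j : 0 <= @ww t x j.
Proof.
have := ss_gt0 t; have := C_ge0 => HC Hs.
rewrite /ww; case: (x == p0); last exact: ltW.
case: (j == ord0) => //; apply: mulr_ge0; [exact: mulr_ge0 | exact: ltW].
Qed.

Lemma LL_ne t : (0 < size (LL t))%N.
Proof. by rewrite size_map -cardE card_ffun card_ord expn_gt0. Qed.

Lemma LL_valid t x : x \in LL t -> forall i j, x.1 i j <= x.2 i j.
Proof.
move=> /mapP [m _ ->] i j /=; rewrite !mxE lerDl; exact: ww_ge0.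
Qed.

Lemma vol_bx t (m : MM t) : vol (bx m) = \prod_(x : X) ww x (m x).
Proof.
rewrite /vol pair_bigA; apply: eq_bigr => x _ /=.
by rewrite !mxE addrAC subrr add0r -surjective_pairing.
Qed.

Lemma LL_sum t : \sum_(x <- LL t) vol x <= eps / 2 ^+ t.+1.
Proof.
rewrite big_map big_enum /=.
under eq_bigr do rewrite vol_bx.
rewrite -(bigA_distr_bigA (fun x j => @ww t x j)) /=.
rewrite (bigD1 p0) //=.
have -> : \sum_(j < (Kp t).+1) ww p0 j = 2 * C * ss t.
  rewrite (bigD1 ord0) //= big1 ?addr0; first by rewrite /ww !eqxx.
  by move=> j /negbTE Hj; rewrite /ww eqxx Hj.
have -> : \prod_(x | x != p0) \sum_(j < (Kp t).+1) ww x j = PP t.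
  apply: eq_bigr => x /negbTE Hx; rewrite /ww Hx sumr_const card_ord.
  by rewrite /ss -[LHS]mulr_natr divfK // pnatr_eq0.
have K0 : ((Kp t).+1%:R : R) != 0 by rewrite pnatr_eq0.
have Kpos : (0 : R) < (Kp t).+1%:R by rewrite ltr0n.
have h2 : (2 : R) ^+ t.+1 != 0 by rewrite expf_neq0 // pnatr_eq0.
have e0 : eps != 0 by rewrite gt_eqF.
have K1 : 1 + (Kp t)%:R != (0:R) by rewrite addrC natr1 pnatr_eq0.
have -> : 2 * C * ss t * PP t = GG t / (Kp t).+1%:R by rewrite /GG /ss; field.
set y := GG t * 2 ^+ t.+1 / eps.
have Hy : y < (Kp t).+1%:R by rewrite /Kp; exact: truncnS_gt.
have -> : GG t = y * (eps / 2 ^+ t.+1) by rewrite /y; field; rewrite e0 h2.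
rewrite ler_pdivrMr // [X in _ <= X]mulrC ler_wpM2r //; last exact: ltW.
by apply: divr_ge0; [exact: ltW | exact: exprn_ge0].
Qed.

Lemma cover_grid (Z : 'M[R]_(n, r)) :
  \sum_k \sum_l Z k l * c k l = 0 ->
  exists t, exists2 x, x \in LL t & inbox x Z.
Proof.
rewrite pair_bigA /= => HZ.
pose zz (x : X) := Z x.1 x.2.
pose t := (\sum_(x : X) Num.truncn `|zz x|)%N.
have Hb : forall x, - TT t <= zz x <= TT t.
  move=> x; rewrite -ler_norml; apply: ltW; apply: lt_le_trans (truncnS_gt _) _.
  rewrite /TT ler_nat ltnS /t (bigD1 x) //=; exact: leq_addr.
pose m : MM t := [ffun x => if x == p0 then ord0
   else inord (minn (Kp t) (Num.truncn ((zz x + TT t) / ss t)))].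
have s0 := ss_gt0 t.
have HK : 2 * TT t = (Kp t).+1%:R * ss t.
  by rewrite /ss [RHS]mulrC divfK // pnatr_eq0.
have Hcell : forall x, x != p0 -> uu m x <= zz x <= uu m x + ss t.
  move=> x Hx; rewrite /uu ffunE (negbTE Hx) inordK; last by rewrite ltnS geq_minl.
  exact: (cell_lemma s0 HK (Hb x)).
have Hdev : `|zz p0 - ee m| <= C * ss t.
  have -> : zz p0 - ee m = \sum_(x | x != p0) cc x * (uu m x - zz x).
    move: HZ; rewrite (bigD1 p0) //= hc mulr1 => /eqP; rewrite addr_eq0 => /eqP; rewrite /zz => ->.
    rewrite /ee opprK addrC -sumrB; apply: eq_bigr => x _.
    by rewrite mulrBr [Z _ _ * _]mulrC.
  apply: le_trans (ler_norm_sum _ _ _) _.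
  apply: (le_trans (y := \sum_(x | x != p0) `|cc x| * ss t)).
    apply: ler_sum => x Hx; rewrite normrM ler_wpM2l //.
    have := Hcell x Hx; rewrite ler_norml => /andP [h1 h2]; apply/andP; split; lra.
  rewrite -mulr_suml ler_wpM2r //; first exact: ltW.
  rewrite /C [X in _ <= X](bigD1 p0) //= lerDr //.
exists t; exists (bx m); first by apply: map_f; rewrite mem_enum.
move=> i j /=; rewrite !mxE.
change (Z i j) with (zz (i, j)).
rewrite /lo /ww; case: (eqVneq (i, j) p0) => Hx.
  rewrite Hx ffunE !eqxx.
  move: Hdev; rewrite ler_norml -!mulrA; set CS := C * ss t => /andP [h1 h2].
  apply/andP; split; lra.
exact: Hcell.
Qed.

End Grid.
Lemma hyperplane (R : realType) n r (c : 'I_n -> 'I_r -> R) p q : c p q != 0 ->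
  lebesgue_null [set Z : 'M[R]_(n, r) | \sum_k \sum_l Z k l * c k l = 0].
Proof.
move=> hpq eps eps0.
pose c' k l := c k l / c p q.
have hc' : c' (p, q).1 (p, q).2 = 1 by rewrite /c' /= divff.
apply: (@levels_null R n r (LL c' (p, q) eps) (0, 0)).
- move=> t; exact: LL_ne.
- by move=> i j /=.
- exact: eps0.
- move=> t x; exact: LL_valid.
- exact: LL_sum.
- move=> Z /= HZ; apply: (cover_grid hc').
  have -> : \sum_k \sum_l Z k l * c' k l = (\sum_k \sum_l Z k l * c k l) / c p q.
    rewrite mulr_suml; apply: eq_bigr => k _; rewrite mulr_suml.
    by apply: eq_bigr => l _; rewrite /c' mulrA.
  by rewrite HZ mul0r.
Qed.

Section P.
Variable R : realType.
Variables n r : nat.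
Implicit Types Q Z V : 'M[R]_(n, r).

Lemma tangent_QS Q (S : 'M[R]_r) : stiefel Q -> S^T = - S -> tangent Q (Q *m S).
Proof.
rewrite /stiefel /tangent => HQ HS.
by rewrite mulmxA HQ mul1mx trmx_mul -mulmxA HQ mulmx1 HS addrN.
Qed.

Lemma tangent_proj Q Z : stiefel Q -> tangent Q (projT Q Z).
Proof.
rewrite /stiefel /tangent /projT => HQ.
set A := Q^T *m Z + Z^T *m Q.
have AT : A^T = A by rewrite /A linearD /= !trmx_mul !trmxK addrC.
rewrite mulmxBr -scalemxAr mulmxA HQ mul1mx [(Z - _)^T]linearB /= [(2^-1 *: _)^T]linearZ /= trmx_mul AT mulmxBl -scalemxAl -mulmxA HQ mulmx1.
rewrite addrACA -/A -opprD -scalerDl.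
have -> : (2^-1 + 2^-1 : R) = 1 by field.
by rewrite scale1r subrr.
Qed.

Lemma proj_tangent Q V : tangent Q V -> projT Q V = V.
Proof. by rewrite /tangent /projT => ->; rewrite mulmx0 scaler0 subr0. Qed.

Lemma part1 Q (i : 'I_n) (j : 'I_r) : stiefel Q -> fixed_idx Q (i, j) ->
  Q i j = 1 \/ Q i j = -1.
Proof.
move=> HQ Hf.
have H0 : forall a, a != j -> Q i a = 0.
  move=> a Haj.
  have := Hf _ (@tangent_QS Q (delta_mx a j - delta_mx j a) HQ _).
  rewrite /= !mxE.
  have -> : \sum_k Q i k * (delta_mx a j - delta_mx j a : 'M[R]_r) k j = Q i a.
    rewrite (bigD1 a) //= big1 ?addr0.
      by rewrite !mxE !eqxx (negbTE Haj) /= subr0 mulr1.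
    move=> k Hk; rewrite !mxE eqxx (negbTE Hk) /=.
    by rewrite [j == a]eq_sym (negbTE Haj) andbF subrr mulr0.
  move=> H; apply: H; by rewrite linearB /= !trmx_delta opprB.
have := Hf _ (@tangent_proj Q (delta_mx i j) HQ).
rewrite /= /projT !mxE eqxx /=.
rewrite (bigD1 j) //= big1 ?addr0; last first.
  by move=> k Hk; rewrite H0 // mul0r.
rewrite !mxE.
rewrite (bigD1 i) //= big1 ?addr0; last first.
  by move=> k Hk; rewrite !mxE (negbTE Hk) /= mulr0.
rewrite (bigD1 i) //= big1 ?addr0; last first.
  by move=> k Hk; rewrite !mxE (negbTE Hk) /= ?andbF mul0r.
rewrite !mxE !eqxx /= mulr1 mul1r.
move=> H.
have H2 : Q i j ^+ 2 = 1.
  have -> : Q i j ^+ 2 = 1 - (1 - 2^-1 * (Q i j * (Q i j + Q i j))) by field.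
  by rewrite H subr0.
by move/eqP: H2; rewrite sqrf_eq1 => /orP [/eqP -> | /eqP ->]; [left|right].
Qed.

Lemma projTD Q A B : projT Q (A + B) = projT Q A + projT Q B.
Proof.
rewrite /projT [(A+B)^T]linearD /= !mulmxDr !mulmxDl !mulmxDr !scalerDr.
by rewrite addrACA opprD addrACA.
Qed.

Lemma projTZ Q a A : projT Q (a *: A) = a *: projT Q A.
Proof.
rewrite /projT [(a *: A)^T]linearZ /= -scalemxAr -scalemxAl -scalerDr -scalemxAr.
by rewrite scalerBr !scalerA mulrC.
Qed.

Lemma projT0 Q : projT Q 0 = 0.
Proof. by rewrite /projT trmx0 mul0mx mulmx0 addr0 mulmx0 scaler0 subr0. Qed.

Lemma projT_entry Q Z (i : 'I_n) (j : 'I_r) :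
  projT Q Z i j = \sum_k \sum_l Z k l * projT Q (delta_mx k l) i j.
Proof.
rewrite {1}(matrix_sum_delta Z).
rewrite (big_morph (projT Q) (projTD Q) (projT0 Q)) summxE.
apply: eq_bigr => k _.
rewrite (big_morph (projT Q) (projTD Q) (projT0 Q)) summxE.
by apply: eq_bigr => l _; rewrite projTZ mxE.
Qed.

End P.

Theorem proposition4p3 (R : realType) (n r : nat) (Q : 'M[R]_(n, r))
    (i : 'I_n) (j : 'I_r) :
  stiefel Q ->
  (fixed_idx Q (i, j) -> Q i j = 1 \/ Q i j = -1) /\
  (~ fixed_idx Q (i, j) ->
     lebesgue_null [set Z : 'M[R]_(n, r) | projT Q Z i j = 0]).
Proof.
move=> HQ; split; first exact: part1.
move=> Hnf.
have [V [HV HVij]] : exists V, tangent Q V /\ V i j != 0.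
  apply: contrapT => H; apply: Hnf => V HV /=.
  apply/eqP; apply: contrapT => HV2; apply: H; exists V; split => //; exact/negP.
have [p [q Hpq]] : exists p q, projT Q (delta_mx p q) i j != 0.
  apply: contrapT => H; move: HVij.
  rewrite -(@proj_tangent _ _ _ Q V HV) projT_entry big1 ?eqxx // => k _.
  rewrite big1 // => l _.
  have -> : projT Q (delta_mx k l) i j = 0.
    by apply/eqP; apply: contrapT => H2; apply: H; exists k, l; exact/negP.
  by rewrite mulr0.
have -> : [set Z : 'M[R]_(n, r) | projT Q Z i j = 0] =
  [set Z | \sum_k \sum_l Z k l * (fun k l => projT Q (delta_mx k l) i j) k l = 0].
  by apply/seteqP; split => Z /=; rewrite projT_entry.
exact: (@hyperplane R n r (fun k l => projT Q (delta_mx k l) i j) p q Hpq).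
Qed.
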